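(* Let $\alpha\in(0,\tfrac12]$, $X_A,X_B>0$, and suppose the solution function $S$ has exactly three zeros $\sigma_1^*<\sigma_2^*<\sigma_3^*$ in $(0,\infty)$. If either $\sqrt{\frac{8\alpha}{1-\alpha}}-\frac{2\alpha}{1-\alpha}\le\frac{X_B}{X_A}\le1$, or $\frac{X_B}{X_A}>1$, then there exists a pre-commitment $p\in[0,X_B]$ by player $B$ to battlefield $b=1$ such that $u_B(p)>\pi_B(\sigma_2^* )$.
   Context: Two-battlefield asymmetric setting: valuations $v_{A,1}=\alpha$, $v_{A,2}=1-\alpha$, $v_{B,1}=1-\alpha$, $v_{B,2}=\alpha$, budgets $X_A,X_B>0$. Define, for $x,y\ge0$, $L(x,y)=\frac{x}{2y}$ if $0\le x\le y$, $y>0$; $L(x,y)=1-\frac{y}{2x}$ if $x>y\ge0$; $L(0,0)=\tfrac12$. Let $c=\frac{(1-\alpha)^2}{\alpha}+\frac{\alpha^2}{1-\alpha}$, $r=X_A/X_B$, and $S:(0,\infty)\to\mathbb R$: $S(\sigma)=\sigma^2(c\sigma-r)$ on $(0,\frac{\alpha}{1-\alpha})$; $S(\sigma)=\frac{\alpha^2}{1-\alpha}(\sigma^3-r)+\alpha\sigma(1-r\sigma)$ on $[\frac{\alpha}{1-\alpha},\frac{1-\alpha}{\alpha})$; $S(\sigma)=\sigma-rc$ on $[\frac{1-\alpha}{\alpha},\infty)$. Player $B$'s equilibrium payoff for a zero $\sigma$: $\pi_B(\sigma)=1-\frac{\sigma}{2}$ if $\sigma\in(0,\frac{\alpha}{1-\alpha})$;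 $\pi_B(\sigma)=1-\alpha-\frac{\alpha\sigma}{2}+\frac{\alpha^2}{2\sigma(1-\alpha)}$ if $\sigma\in[\frac{\alpha}{1-\alpha},\frac{1-\alpha}{\alpha})$; $\pi_B(\sigma)=\frac{c}{2\sigma}$ if $\sigma\ge\frac{1-\alpha}{\alpha}$. Pre-commitment: $B$ places $p\in[0,X_B]$ on one battlefield $b\in\{1,2\}$; $u_A^{M}(p)=v_{A,b}+(1-v_{A,b})L(X_A-p,X_B-p)$ (for $p\le X_A$), $u_A^{W}(p)=(1-v_{A,b})L(X_A,X_B-p)$; $A$'s response is $\mathtt A_b(p)=\mathtt M$ if $p\le X_A$ and $u_A^M(p)>u_A^W(p)$, else $\mathtt A_b(p)=\mathtt W$ (ties go to withdrawing). $B$'s payoff is $u_B(p)=(1-v_{B,b})L(X_B-p,X_A-p)$ if $\mathtt A_b(p)=\mathtt M$ and $u_B(p)=v_{B,b}+(1-v_{B,b})L(X_B-p,X_A)$ if $\mathtt A_b(p)=\mathtt W$. *)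

(* Defs.v *)
From Stdlib Require Import Reals Lra.
Open Scope R_scope.

Definition L (x y : R) : R :=
  if Req_EM_T x 0 then (if Req_EM_T y 0 then 1/2 else x / (2 * y))
  else if Rle_dec x y then x / (2 * y) else 1 - y / (2 * x).

Definition cst (alpha : R) : R := (1 - alpha)^2 / alpha + alpha^2 / (1 - alpha).

Definition Sfun (alpha XA XB sigma : R) : R :=
  let r := XA / XB in
  let c := cst alpha in
  if Rlt_dec sigma (alpha / (1 - alpha)) then sigma^2 * (c * sigma - r)
  else if Rlt_dec sigma ((1 - alpha) / alpha) then
    alpha^2 / (1 - alpha) * (sigma^3 - r) + alpha * sigma * (1 - r * sigma)
  else sigma - r * c.

Definition piB (alpha sigma : R) : R :=
  if Rlt_dec sigma (alpha / (1 - alpha)) then 1 - sigma / 2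
  else if Rlt_dec sigma ((1 - alpha) / alpha) then
    1 - alpha - alpha * sigma / 2 + alpha^2 / (2 * sigma * (1 - alpha))
  else cst alpha / (2 * sigma).

Inductive bf := BF1 | BF2.

Definition vA (alpha : R) (b : bf) : R := match b with BF1 => alpha | BF2 => 1 - alpha end.
Definition vB (alpha : R) (b : bf) : R := match b with BF1 => 1 - alpha | BF2 => alpha end.

Definition uAM (alpha XA XB : R) (b : bf) (p : R) : R :=
  vA alpha b + (1 - vA alpha b) * L (XA - p) (XB - p).
Definition uAW (alpha XA XB : R) (b : bf) (p : R) : R :=
  (1 - vA alpha b) * L XA (XB - p).

(* A matches (true) iff p <= X_A and u_A^M(p) > u_A^W(p); ties go to withdrawing. *)
Definition A_matches (alpha XA XB : R) (b : bf) (p : R) : bool :=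
  if Rle_dec p XA then
    (if Rlt_dec (uAW alpha XA XB b p) (uAM alpha XA XB b p) then true else false)
  else false.

Definition uB (alpha XA XB : R) (b : bf) (p : R) : R :=
  if A_matches alpha XA XB b p then (1 - vB alpha b) * L (XB - p) (XA - p)
  else vB alpha b + (1 - vB alpha b) * L (XB - p) XA.

(* Main.v *)
Require Import Defs.
From Stdlib Require Import Reals Lra Psatz.
Open Scope R_scope.

Lemma Q_pos (a y : R) : 0 < a -> a <= 1 -> 0 < y -> (y*y <= a \/ 1 <= 3*a) ->
  0 < a*y^2 + (a-1)*y + (a^2-a+1).
Proof.
  intros Ha Ha1 Hy [H|H].
  - assert (y <= 1) by nra.
    assert (0 <= (1-a)*(1-y)) by nra.
    assert (0 < a*y^2 + a^2) by nra. nra.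
  - assert (0 <= (2*a*y + (a-1))^2) by apply pow2_ge_0.
    assert (0 <= (5*a-1)*(1-a)) by nra. assert (0 < 4*a^3) by nra.
    nra.
Qed.

Lemma P_pos (a x y : R) : 0 < a -> 0 < x -> x < y -> (y*y <= a \/ 1 <= 3*a) ->
  0 < a*x^2*y^2 + a^2*(x^2+x*y+y^2) + a - x*y.
Proof.
  intros Ha Hx Hxy [H|H].
  - assert (x*y < a) by nra. assert (0<x*y) by nra.
    assert (0 <= a*x^2*y^2) by (apply Rmult_le_pos; [nra| apply pow2_ge_0]).
    assert (0 <= a^2*(x^2+x*y+y^2)) by (apply Rmult_le_pos; [apply pow2_ge_0| nra]). nra.
  - assert (0 <= a*(x*y-1)^2) by (apply Rmult_le_pos; [nra| apply pow2_ge_0]).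
    assert (0 < a^2*(y-x)^2) by (apply Rmult_lt_0_compat; [nra| apply pow_lt; nra]).
    assert (0 < x*y) by nra.
    assert (0 <= x*y*((3*a-1)*(a+1))) by (apply Rmult_le_pos; nra).
    nra.
Qed.

Lemma notwo a c r x y : 0<a -> a <= 1 -> 0<c -> c*a = a^2-a+1 -> 0<x -> x<y -> a <= y ->
  a*(y^3-r)+y*(1-r*y) = 0 ->
  ((x<a /\ r = c*x) \/ (a <= x /\ a*(x^3-r)+x*(1-r*x)=0)) ->
  (y*y <= a \/ 1 <= 3*a) -> False.
Proof.
  intros Ha Ha1 Hc Hca Hx Hxy Hay Ey Hx' Hcond.
  assert (Ey' : r*(y^2+a) = a*y^3 + y) by nra.
  destruct Hx' as [[Hxa Hr]|[Hax Ex]].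
  - assert (r < c*a) by nra.
    assert (Hlt : r*(y^2+a) < (c*a)*(y^2+a)).
    { apply Rmult_lt_compat_r; [ | exact H]. nra. }
    assert (HQ := Q_pos a y Ha Ha1 ltac:(lra) Hcond).
    assert (0 <= (y-a)*(a*y^2 + (a-1)*y + (a^2-a+1))) by (apply Rmult_le_pos; lra).
    rewrite Hca in Hlt. nra.
  - assert (Ex' : r*(x^2+a) = a*x^3 + x) by nra.
    assert (E : (a*y^3+y)*(x^2+a) = (a*x^3+x)*(y^2+a)).
    { rewrite <- Ey', <- Ex'. ring. }
    assert (HP := P_pos a x y Ha Hx Hxy Hcond).
    assert (0 < (y-x)*(a*x^2*y^2 + a^2*(x^2+x*y+y^2) + a - x*y)) by (apply Rmult_lt_0_compat; lra).
    nra.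
Qed.

Lemma zero_cases al XA XB s : 0 < al <= 1/2 -> 0 < s -> Sfun al XA XB s = 0 ->
  (s < al/(1-al) /\ XA/XB = cst al * s) \/
  (al/(1-al) <= s < (1-al)/al /\ (al/(1-al))*(s^3 - XA/XB) + s*(1 - XA/XB*s) = 0) \/
  ((1-al)/al <= s /\ s = XA/XB * cst al).
Proof.
  intros Hal Hs. unfold Sfun; cbv zeta.
  destruct (Rlt_dec s (al/(1-al))) as [H1|H1].
  - intro E. left. split; [exact H1|].
    assert (s^2 <> 0) by (apply pow_nonzero; lra).
    destruct (Rmult_integral _ _ E); [contradiction| lra].
  - destruct (Rlt_dec s ((1-al)/al)) as [H2|H2].
    + intro E. right; left. split; [lra|].
      assert (E' : al * ((al/(1-al))*(s^3 - XA/XB) + s*(1 - XA/XB*s)) = 0).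
      { rewrite <- E. set (r := XA/XB). field. lra. }
      destruct (Rmult_integral _ _ E'); [lra| assumption].
    + intro E. right; right. split; lra.
Qed.

Lemma L_nonneg x y : 0 <= x -> 0 < y -> 0 <= L x y.
Proof.
  intros Hx Hy. unfold L.
  destruct (Req_EM_T x 0); destruct (Req_EM_T y 0); try lra.
  - subst. unfold Rdiv. lra.
  - destruct (Rle_dec x y).
    + apply Rmult_le_pos; [lra| left; apply Rinv_0_lt_compat; lra].
    + assert (y/(2*x) < 1).
      { apply (Rmult_lt_reg_r (2*x)); [lra|]. unfold Rdiv. rewrite Rmult_assoc, Rinv_l; lra. }
      lra.
Qed.

Lemma L_gt x y : 0 <= y -> y < x -> L x y = 1 - y/(2*x).
Proof.
  intros Hy Hxy. unfold L.
  destruct (Req_EM_T x 0); [lra|]. destruct (Rle_dec x y); [lra|]. reflexivity.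
Qed.

Lemma L_eq x : 0 < x -> L x x = 1/2.
Proof.
  intros Hx. unfold L.
  destruct (Req_EM_T x 0); [lra|]. destruct (Rle_dec x x); [|lra]. field. lra.
Qed.

Lemma L_zero y : 0 < y -> L 0 y = 0.
Proof.
  intros Hy. unfold L.
  destruct (Req_EM_T 0 0); [|lra]. destruct (Req_EM_T y 0); [lra|]. unfold Rdiv. ring.
Qed.

Lemma case_le al XA XB : 0 < al <= 1/2 -> 0 < XA -> 0 < XB ->
  3*(al/(1-al)) < 1 -> 8*(al/(1-al))*XA^2 <= (XB+2*(al/(1-al))*XA)^2 ->
  2*(al/(1-al))*XA <= XB -> XB <= XA ->
  1 - al <= uB al XA XB BF1 ((XB+2*(al/(1-al))*XA)/2).
Proof.
  intros Hal HA HB H3 Hq H2 H1.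
  set (a := al/(1-al)) in *.
  assert (Ha : 0 < a) by (unfold a; apply Rdiv_lt_0_compat; lra).
  assert (Hala : al = a*(1-al)) by (unfold a; field; lra).
  set (p := (XB+2*a*XA)/2).
  assert (Hx : 0 < XA - p) by (unfold p; nra).
  assert (Hy : 0 <= XB - p) by (unfold p; lra).
  unfold uB.
  destruct (A_matches al XA XB BF1 p) eqn:Hm.
  - exfalso. unfold A_matches in Hm.
    destruct (Rle_dec p XA); [|discriminate].
    destruct (Rlt_dec (uAW al XA XB BF1 p) (uAM al XA XB BF1 p)) as [Hlt|]; [|discriminate].
    revert Hlt. unfold uAW, uAM, vA.
    rewrite (L_gt XA (XB - p)) by (unfold p; nra).
    destruct (Req_EM_T XA XB) as [E|NE].
    + rewrite <- E, L_eq by lra.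
      assert (XB - p = XA*(1-2*a)/2) by (unfold p; rewrite <- E; field).
      rewrite <- E in H. rewrite H.
      assert (XA*(1-2*a)/2/(2*XA) = (1-2*a)/4) by (field; lra).
      rewrite H0. nra.
    + rewrite (L_gt (XA - p) (XB - p)) by lra.
      set (x := XA - p) in *. set (y := XB - p) in *.
      assert (K : y/(2*x) - y/(2*XA) - a = (y*p - a*(2*x*XA)) * / (2*x*XA)).
      { unfold x in *. field. split; lra. }
      assert (Hn : 0 <= y*p - a*(2*x*XA)) by (unfold y, x, p; nra).
      assert (0 <= (y*p - a*(2*x*XA)) * / (2*x*XA)).
      { apply Rmult_le_pos; [exact Hn| left; apply Rinv_0_lt_compat]. nra. }
      rewrite <- K in H.
      assert (0 <= (1-al)*(y/(2*x) - y/(2*XA) - a)) by (apply Rmult_le_pos; lra).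
      nra.
  - unfold vB. assert (0 <= L (XB - p) XA) by (apply L_nonneg; lra). nra.
Qed.

Theorem theorem2 (alpha XA XB s1 s2 s3 : R) :
  0 < alpha <= 1/2 -> 0 < XA -> 0 < XB ->
  0 < s1 -> s1 < s2 -> s2 < s3 ->
  Sfun alpha XA XB s1 = 0 -> Sfun alpha XA XB s2 = 0 -> Sfun alpha XA XB s3 = 0 ->
  (forall s, 0 < s -> Sfun alpha XA XB s = 0 -> s = s1 \/ s = s2 \/ s = s3) ->
  ((sqrt (8 * alpha / (1 - alpha)) - 2 * alpha / (1 - alpha) <= XB / XA /\ XB / XA <= 1)
   \/ XB / XA > 1) ->
  exists p, 0 <= p <= XB /\ uB alpha XA XB BF1 p > piB alpha s2.
Proof.
  intros Hal HA HB H1 H12 H23 Z1 Z2 Z3 _ Hcase.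
  assert (Ha : 0 < alpha/(1-alpha)) by (apply Rdiv_lt_0_compat; lra).
  assert (Ha1 : alpha/(1-alpha) <= 1).
  { apply (Rmult_le_reg_r (1-alpha)); [lra|]. unfold Rdiv. rewrite Rmult_assoc, Rinv_l; lra. }
  assert (Hb : 1 <= (1-alpha)/alpha).
  { apply (Rmult_le_reg_r alpha); [lra|]. unfold Rdiv. rewrite Rmult_assoc, Rinv_l; lra. }
  assert (Hca : cst alpha * (alpha/(1-alpha)) = (alpha/(1-alpha))^2 - alpha/(1-alpha) + 1).
  { unfold cst. field. lra. }
  assert (Hc : 0 < cst alpha).
  { unfold cst. assert (0 < (1-alpha)^2/alpha) by (apply Rdiv_lt_0_compat; [apply pow_lt|]; lra).
    assert (0 <= alpha^2/(1-alpha)) by (apply Rmult_le_pos; [apply pow2_ge_0| left; apply Rinv_0_lt_compat; lra]).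
    lra. }
  pose proof (zero_cases alpha XA XB s1 Hal H1 Z1) as C1.
  pose proof (zero_cases alpha XA XB s2 Hal ltac:(lra) Z2) as C2.
  pose proof (zero_cases alpha XA XB s3 Hal ltac:(lra) Z3) as C3.
  set (a := alpha/(1-alpha)) in *.
  set (b := (1-alpha)/alpha) in *.
  set (r := XA/XB) in *.
  set (c := cst alpha) in *.
  assert (R2 : a <= s2 < b /\ a*(s2^3 - r) + s2*(1 - r*s2) = 0).
  { destruct C2 as [[Hs Er]|[R|[Hs Er]]].
    - exfalso. destruct C1 as [h|[h|h]]; destruct h as [h h1]; [nra|lra|lra].
    - exact R.
    - exfalso. destruct C3 as [h|[h|h]]; destruct h as [h h1]; [lra|lra|lra]. }
  destruct R2 as [[Ha2 Hb2] E2].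
  assert (C1' : (s1 < a /\ r = c*s1) \/ (a <= s1 /\ a*(s1^3-r)+s1*(1-r*s1)=0)).
  { destruct C1 as [h|[h|h]]; [left; destruct h; split; lra|right; destruct h as [[h0 h1] h2]; split; lra|destruct h; lra]. }
  assert (Hsq : a < s2*s2).
  { destruct (Rlt_le_dec a (s2*s2)) as [h|h]; [exact h|].
    exfalso. exact (notwo a c r s1 s2 Ha Ha1 Hc Hca H1 H12 Ha2 E2 C1' (or_introl h)). }
  assert (H3 : 3*a < 1).
  { destruct (Rlt_le_dec (3*a) 1) as [h|h]; [exact h|].
    exfalso. exact (notwo a c r s1 s2 Ha Ha1 Hc Hca H1 H12 Ha2 E2 C1' (or_intror h)). }
  assert (Hpi : piB alpha s2 < 1 - alpha).
  { unfold piB. fold a b.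
    destruct (Rlt_dec s2 a); [lra|]. destruct (Rlt_dec s2 b); [|lra].
    assert (K : alpha^2/(2*s2*(1-alpha)) = alpha*s2/2 - alpha*(s2*s2 - a) * /(2*s2)).
    { unfold a. field. lra. }
    rewrite K.
    assert (0 < alpha*(s2*s2 - a) * /(2*s2)).
    { apply Rmult_lt_0_compat; [apply Rmult_lt_0_compat; lra| apply Rinv_0_lt_compat; lra]. }
    lra. }
  destruct Hcase as [[Hs Ht]|Ht].
  - assert (E8 : 8 * alpha / (1 - alpha) = 8*a) by (unfold a; field; lra).
    assert (E2' : 2 * alpha / (1 - alpha) = 2*a) by (unfold a; field; lra).
    rewrite E8, E2' in Hs.
    set (t := XB/XA) in *.
    assert (Hxb : XB = t*XA) by (unfold t; field; lra).
    assert (Hsq8 : sqrt (8*a) * sqrt (8*a) = 8*a) by (apply sqrt_sqrt; lra).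
    assert (Hsp : 0 <= sqrt (8*a)) by apply sqrt_pos.
    assert (H4a : 4*a <= sqrt (8*a)) by nra.
    assert (Ht2 : 2*a <= t) by lra.
    assert (Hq : 8*a <= (t+2*a)^2) by nra.
    exists ((XB+2*a*XA)/2). split.
    + split; nra.
    + pose proof (case_le alpha XA XB Hal HA HB H3) as K. fold a in K.
      assert (1 - alpha <= uB alpha XA XB BF1 ((XB + 2 * a * XA) / 2)).
      { apply K.
        - rewrite Hxb. assert (0 < XA^2) by (apply pow_lt; lra). nra.
        - rewrite Hxb. nra.
        - rewrite Hxb. nra. }
      lra.
  - exists XB. split; [lra|].
    assert (XA < XB).
    { unfold r in *. apply (Rmult_lt_reg_r (/XA)); [apply Rinv_0_lt_compat; lra|].
      rewrite Rinv_r by lra. exact Ht. }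
    unfold uB, A_matches. destruct (Rle_dec XB XA); [lra|].
    unfold vB. replace (XB - XB) with 0 by ring. rewrite L_zero by lra. lra.
Qed.
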